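(* Let $F$ be a non-archimedean local field of characteristic zero with ring of integers $\mathfrak{o}$ and maximal ideal $\mathfrak{p}$. Let $a,b,c\in F$ with $d=b^2-4ac\neq0$ satisfy (A1) $a,b\in\mathfrak{o}$, $c\in\mathfrak{o}^\times$, and (A2) if $d\notin F^{\times2}$ then $d$ generates the discriminant ideal of $L/F$, and if $d\in F^{\times2}$ then $d\in\mathfrak{o}^\times$. Let $\xi_0=\frac{-b+\sqrt d}2$ and $\alpha=\frac{b+\sqrt d}{2c}$ if $L$ is a field, and $\xi_0=(\frac{-b+\sqrt d}2,\frac{-b-\sqrt d}2)$, $\alpha=(\frac{b+\sqrt d}{2c},\frac{b-\sqrt d}{2c})$ if $L=F\oplus F$. Then: (i) $\{1,\xi_0\}$ is a basis of the free $\mathfrak{o}$-module $\mathfrak{o}_L$, and so is $\{1,\alpha\}$; (ii) there is no $x\in\mathfrak{o}$ with $\alpha+x\in\mathfrak{P}$.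
   Context: $L=F(\sqrt d)$ if $d\notin F^{\times2}$, and $L=F\oplus F$ (with $F$ embedded diagonally) if $d\in F^{\times2}$. $\mathfrak{o}_L$ is the ring of integers of $L$ if $L$ is a field, and $\mathfrak{o}\oplus\mathfrak{o}$ otherwise. $\mathfrak{P}=\mathfrak{p}\mathfrak{o}_L$. *)

(* Defs.v *)
From HB Require Import structures.
From mathcomp Require Import all_boot all_order all_algebra all_field.
Set Implicit Arguments. Unset Strict Implicit. Unset Printing Implicit Defensive.
Import Order.TTheory GRing.Theory Num.Theory.
Local Open Scope ring_scope.

Section LocalField.
Variables (F : fieldType) (v : F -> int).

(* the valuation v is only meaningful on nonzero elements *)
Definition vint (x : F) : Prop := x = 0 \/ 0 <= v x.
Definition vmax (x : F) : Prop := x = 0 \/ 1 <= v x.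
Definition vunit (x : F) : Prop := x <> 0 /\ v x = 0.

Record nonarch_local_field_char0 : Prop := {
  v_mul : forall x y, x != 0 -> y != 0 -> v (x * y) = v x + v y;
  v_add : forall x y, x != 0 -> y != 0 -> x + y != 0 ->
            Num.min (v x) (v y) <= v (x + y);
  v_surj : forall n : int, exists x, x != 0 /\ v x = n;
  v_complete : forall u : nat -> F,
     (forall N : int, exists n0, forall m n, (n0 <= m)%N -> (n0 <= n)%N ->
         u m - u n = 0 \/ N <= v (u m - u n)) ->
     exists l, forall N : int, exists n0, forall n, (n0 <= n)%N ->
         u n - l = 0 \/ N <= v (u n - l);
  residue_finite : exists s : seq F, (forall y, y \in s -> vint y) /\
     forall x, vint x -> exists2 y, y \in s & vmax (x - y);
  char0 : [pchar F] =i pred0 }.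

Definition is_square (d : F) : Prop := exists y : F, y ^+ 2 = d.

Section Alg.
Variable A : lalgType F.
Definition o_basis2 (oA : A -> Prop) (e1 e2 : A) : Prop :=
  [/\ oA e1, oA e2,
      (forall z, oA z <-> exists x y, [/\ vint x, vint y & z = x *: e1 + y *: e2])
    & (forall x y, vint x -> vint y -> x *: e1 + y *: e2 = 0 -> x = 0 /\ y = 0)].

Definition ext_ideal (oA : A -> Prop) (z : A) : Prop :=
  exists s : seq (F * A), (forall q, q \in s -> vmax q.1 /\ oA q.2) /\
     z = \sum_(q <- s) q.1 *: q.2.
End Alg.

Section Ext.
Variable L : fieldExtType F.
Definition intL (z : L) : Prop :=
  exists p : {poly F}, [/\ p \is monic, (forall i, vint p`_i) &
     root (map_poly (in_alg L) p) z].

Definition trL (z : L) : F :=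
  \tr (passmx.mxof (vbasis {:L}) (vbasis {:L}) (amulr z)).

Definition disc2 (x1 x2 : L) : F :=
  \det (\matrix_(i < 2, j < 2)
          trL ((if i == 0 :> nat then x1 else x2) * (if j == 0 :> nat then x1 else x2))).

Definition in_disc_ideal (y : F) : Prop :=
  exists s : seq (F * (L * L)),
    (forall q, q \in s -> [/\ vint q.1, intL q.2.1 & intL q.2.2]) /\
    y = \sum_(q <- s) q.1 * disc2 q.2.1 q.2.2.

Definition generates_disc_ideal (d : F) : Prop :=
  forall y, in_disc_ideal y <-> exists2 r, vint r & y = r * d.
End Ext.

(* the split algebra F + F with F diagonally embedded and o_L = o + o *)
Definition intSplit (z : (F^o * F^o)%type) : Prop := vint z.1 /\ vint z.2.

End LocalField.

(* Main.v *)
Require Import Defs.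
From HB Require Import structures.
From mathcomp Require Import all_boot all_order all_algebra all_field.
From mathcomp Require Import ring.
From mathcomp Require Import zify.
Import Order.TTheory GRing.Theory Num.Theory.
Set Implicit Arguments. Unset Strict Implicit. Unset Printing Implicit Defensive.
Local Open Scope ring_scope.

Lemma v1 (F : fieldType) (v : F -> int) (hF : nonarch_local_field_char0 v) :
  v 1 = 0.
Proof.
have := v_mul hF (oner_neq0 F) (oner_neq0 F); rewrite mulr1.
by move=> /(congr1 (fun z => z - v 1)); rewrite subrr addrK => <-.
Qed.

Lemma vM (F : fieldType) (v : F -> int) (hF : nonarch_local_field_char0 v) x y :
  x != 0 -> y != 0 -> v (x * y) = v x + v y.
Proof. exact: v_mul. Qed.

Lemma vN1 (F : fieldType) (v : F -> int) (hF : nonarch_local_field_char0 v) :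
  v (-1) = 0.
Proof.
have n1 : (-1 : F) != 0 by rewrite oppr_eq0 oner_neq0.
have := vM hF n1 n1; rewrite mulrNN mulr1 (v1 hF).
by move: (v (-1)) => z; lia.
Qed.

Lemma vN (F : fieldType) (v : F -> int) (hF : nonarch_local_field_char0 v) x :
  v (- x) = v x.
Proof.
have [->|x0] := eqVneq x 0; first by rewrite oppr0.
have n1 : (-1 : F) != 0 by rewrite oppr_eq0 oner_neq0.
by rewrite -mulN1r (vM hF n1 x0) (vN1 hF) add0r.
Qed.

Lemma vV (F : fieldType) (v : F -> int) (hF : nonarch_local_field_char0 v) x :
  x != 0 -> v x^-1 = - v x.
Proof.
move=> x0; have xi : x^-1 != 0 by rewrite invr_eq0.
have := vM hF x0 xi; rewrite mulfV // (v1 hF).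
by move: (v x) (v x^-1) => z w; lia.
Qed.

Definition vge (F : fieldType) (v : F -> int) (N : int) (x : F) := x = 0 \/ N <= v x.

Lemma vge_add (F : fieldType) (v : F -> int) (hF : nonarch_local_field_char0 v) N x y :
  vge v N x -> vge v N y -> vge v N (x + y).
Proof.
move=> [->|hx]; first by rewrite add0r.
move=> [->|hy]; first by rewrite addr0; right.
have [x0|x0] := eqVneq x 0; first by rewrite x0 add0r; right.
have [y0|y0] := eqVneq y 0; first by rewrite y0 addr0; right.
have [s0|s0] := eqVneq (x + y) 0; first by left.
right; have := v_add hF x0 y0 s0; move: hx hy.
move: (v x) (v y) (v (x + y)) => a b c ha hb.
case: (leP a b) => _ h; lia.
Qed.

Lemma vge_mul (F : fieldType) (v : F -> int) (hF : nonarch_local_field_char0 v) M N x y :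
  vge v M x -> vge v N y -> vge v (M + N) (x * y).
Proof.
move=> [->|hx]; first by rewrite mul0r; left.
move=> [->|hy]; first by rewrite mulr0; left.
have [x0|x0] := eqVneq x 0; first by rewrite x0 mul0r; left.
have [y0|y0] := eqVneq y 0; first by rewrite y0 mulr0; left.
right; rewrite (vM hF x0 y0); move: hx hy; move: (v x) (v y) => a b; lia.
Qed.

Lemma vge_opp (F : fieldType) (v : F -> int) (hF : nonarch_local_field_char0 v) N x :
  vge v N x -> vge v N (- x).
Proof. by move=> [->|h]; [left; rewrite oppr0 | right; rewrite vN]. Qed.

Lemma vge_le (F : fieldType) (v : F -> int) M N x : M <= N -> vge v N x -> vge v M x.
Proof. by move=> le [->|h]; [left|right; move: h; move: (v x) => a; lia]. Qed.

Lemma vintE (F : fieldType) (v : F -> int) x : vint v x = vge v 0 x.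
Proof. by []. Qed.
Lemma vmaxE (F : fieldType) (v : F -> int) x : vmax v x = vge v 1 x.
Proof. by []. Qed.

Lemma vint_add (F : fieldType) (v : F -> int) (hF : nonarch_local_field_char0 v) x y :
  vint v x -> vint v y -> vint v (x + y).
Proof. exact: vge_add. Qed.
Lemma vint_mul (F : fieldType) (v : F -> int) (hF : nonarch_local_field_char0 v) x y :
  vint v x -> vint v y -> vint v (x * y).
Proof. exact: (vge_mul hF (M:=0) (N:=0)). Qed.
Lemma vint_opp (F : fieldType) (v : F -> int) (hF : nonarch_local_field_char0 v) x :
  vint v x -> vint v (- x).
Proof. exact: vge_opp. Qed.
Lemma vint_sub (F : fieldType) (v : F -> int) (hF : nonarch_local_field_char0 v) x y :
  vint v x -> vint v y -> vint v (x - y).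
Proof. by move=> hx hy; apply: vint_add => //; apply: vint_opp. Qed.
Lemma vint0 (F : fieldType) (v : F -> int) : vint v 0.
Proof. by left. Qed.
Lemma vint1 (F : fieldType) (v : F -> int) (hF : nonarch_local_field_char0 v) : vint v 1.
Proof. by right; rewrite (v1 hF). Qed.
Lemma vint_nat (F : fieldType) (v : F -> int) (hF : nonarch_local_field_char0 v) n :
  vint v n%:R.
Proof.
elim: n => [|n IH]; first exact: vint0.
by rewrite -addn1 natrD; apply: vint_add => //; apply: vint1.
Qed.
Lemma vint_exp (F : fieldType) (v : F -> int) (hF : nonarch_local_field_char0 v) x n :
  vint v x -> vint v (x ^+ n).
Proof.
move=> hx; elim: n => [|n IH]; first by rewrite expr0; apply: vint1.
by rewrite exprS; apply: vint_mul.
Qed.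
Lemma vunit_inv (F : fieldType) (v : F -> int) (hF : nonarch_local_field_char0 v) u :
  vunit v u -> vunit v u^-1.
Proof.
move=> [/eqP u0 vu]; split; first by apply/eqP; rewrite invr_eq0.
by rewrite (vV hF u0) vu.
Qed.
Lemma vunit_int (F : fieldType) (v : F -> int) u : vunit v u -> vint v u.
Proof. by move=> [_ h]; right; rewrite h. Qed.

Lemma vmax_int (F : fieldType) (v : F -> int) x : vmax v x -> vint v x.
Proof. by apply: vge_le. Qed.
Lemma vmax_add (F : fieldType) (v : F -> int) (hF : nonarch_local_field_char0 v) x y :
  vmax v x -> vmax v y -> vmax v (x + y).
Proof. exact: vge_add. Qed.
Lemma vmax_mul (F : fieldType) (v : F -> int) (hF : nonarch_local_field_char0 v) x y :
  vmax v x -> vint v y -> vmax v (x * y).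
Proof. by move=> hx hy; have := vge_mul hF hx hy; rewrite addr0. Qed.
Lemma vmax0 (F : fieldType) (v : F -> int) : vmax v 0.
Proof. by left. Qed.
Lemma not_vmax1 (F : fieldType) (v : F -> int) (hF : nonarch_local_field_char0 v) : ~ vmax v 1.
Proof. by move=> [/eqP|]; [rewrite oner_eq0 | rewrite (v1 hF)]. Qed.

Lemma vint_sq (F : fieldType) (v : F -> int) (hF : nonarch_local_field_char0 v) y :
  vint v (y ^+ 2) -> vint v y.
Proof.
have [->|y0] := eqVneq y 0; first by left.
move=> [/eqP|]; first by rewrite expf_eq0 (negPf y0) andbF.
rewrite expr2 (vM hF y0 y0) => h; right; move: h; move: (v y) => a; lia.
Qed.

Lemma vint_root2 (F : fieldType) (v : F -> int) (hF : nonarch_local_field_char0 v) t b k :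
  t ^+ 2 + b * t + k = 0 -> vint v b -> vint v k -> vint v t.
Proof.
move=> ht hb hk.
have [->|t0] := eqVneq t 0; first by left.
case: (leP 0 (v t)) => [h|h]; first by right.
exfalso.
have h1 : vge v (v t) (b * t).
  have := vge_mul hF hb (or_intror (lexx (v t)) : vge v (v t) t); rewrite add0r; exact.
have h2 : vge v (v t) k by apply: vge_le hk; move: h; move: (v t) => a; lia.
have := vge_opp hF (vge_add hF h1 h2).
have -> : - (b * t + k) = t ^+ 2.
  by apply/eqP; rewrite eq_sym -subr_eq0 opprK addrA ht.
case=> [/eqP|]; first by rewrite expf_eq0 (negPf t0) andbF.
rewrite expr2 (vM hF t0 t0); move: h; move: (v t) => a; lia.
Qed.

Lemma comb_scale (F : fieldType) (A : lalgType F) (e : A) x y u w :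
  x *: 1 + y *: (u *: (e + w *: 1)) = (x + y * u * w) *: 1 + (y * u) *: e.
Proof.
rewrite !scalerDr !scalerA scalerDl addrCA addrA.
by rewrite -addrA addrC.
Qed.

Lemma comb_add (F : fieldType) (A : lalgType F) (e : A) x y x' y' :
  (x *: 1 + y *: e) + (x' *: 1 + y' *: e) = (x + x') *: 1 + (y + y') *: e.
Proof. by rewrite !scalerDl addrACA. Qed.

Lemma comb_mul (F : fieldType) (A : lalgType F) (e : A) k x y :
  k *: (x *: 1 + y *: e) = (k * x) *: 1 + (k * y) *: e.
Proof. by rewrite scalerDr !scalerA. Qed.

Lemma basis_change (F : fieldType) (v : F -> int) (hF : nonarch_local_field_char0 v)
  (A : lalgType F) (oA : A -> Prop) (e : A) u w :
  o_basis2 v oA 1 e -> vunit v u -> vint v w -> o_basis2 v oA 1 (u *: (e + w *: 1)).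
Proof.
case=> h1 he hc hi hu hw.
have hui := vunit_int hu.
have [u0 _] := hu.
split=> //.
- apply/hc; exists (u * w), u; split=> //; first exact: vint_mul.
  by rewrite scalerDr scalerA addrC.
- move=> z; split.
  + move=> /hc [x [y [hx hy ->]]].
    exists (x - y * u^-1 * u * w), (y * u^-1); split.
    * apply: vint_sub => //; apply: vint_mul => //; apply: vint_mul => //.
      apply: vint_mul => //; exact: vunit_int (vunit_inv hF hu).
    * apply: vint_mul => //; exact: vunit_int (vunit_inv hF hu).
    * by rewrite comb_scale subrK mulfVK //; apply/eqP.
  + move=> [x [y [hx hy ->]]]; apply/hc; exists (x + y * u * w), (y * u); split.
    * by apply: vint_add => //; apply: vint_mul => //; apply: vint_mul.
    * exact: vint_mul.
    * exact: comb_scale.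
- move=> x y hx hy; rewrite comb_scale => /hi [].
  + by apply: vint_add => //; apply: vint_mul => //; apply: vint_mul.
  + exact: vint_mul.
  have u0' : u != 0 by apply/eqP.
  move=> h1' /eqP; rewrite mulf_eq0 (negbTE u0') orbF => /eqP y0.
  by move: h1'; rewrite y0 !mul0r addr0.
Qed.

Lemma no_ideal (F : fieldType) (v : F -> int) (hF : nonarch_local_field_char0 v)
  (A : lalgType F) (oA : A -> Prop) (e : A) :
  o_basis2 v oA 1 e -> ~ exists x, vint v x /\ ext_ideal v oA (e + x *: 1).
Proof.
case=> h1 he hc hi [x [hx [s [hs hz]]]].
have : exists U W, [/\ vmax v U, vmax v W & \sum_(q <- s) q.1 *: q.2 = U *: 1 + W *: e].
  elim: s hs {hz} => [|q s IH] hs.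
    by exists 0, 0; split; [exact: vmax0|exact: vmax0| rewrite big_nil !scale0r addr0].
  have [U [W [hU hW hS]]] : exists U W, [/\ vmax v U, vmax v W & \sum_(q <- s) q.1 *: q.2 = U *: 1 + W *: e].
    by apply: IH => q' hq'; apply: hs; rewrite in_cons hq' orbT.
  have [hq1 hq2] := hs q (mem_head q s).
  have [x' [y' [hx' hy' eq2]]] := (hc q.2).1 hq2.
  exists (q.1 * x' + U), (q.1 * y' + W); split.
  - by apply: vmax_add => //; apply: vmax_mul.
  - by apply: vmax_add => //; apply: vmax_mul.
  - by rewrite big_cons hS eq2 comb_mul comb_add.
move=> [U [W [hU hW hS]]].
move: hz; rewrite hS => /eqP; rewrite -subr_eq0 => /eqP.
have -> : e + x *: 1 - (U *: 1 + W *: e) = (x - U) *: 1 + (1 - W) *: e.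
  by rewrite !scalerBl scale1r opprD addrACA [e - _]addrC addrACA [- _ + x%:A]addrC.
move/hi => [].
- by apply: vint_sub => //; exact: vmax_int.
- by apply: vint_sub; [exact: hF|exact: vint1|exact: vmax_int].
move=> _ /eqP; rewrite subr_eq0 => /eqP W1.
by apply: (not_vmax1 hF); rewrite W1.
Qed.

Lemma two_neq0 (F : fieldType) (v : F -> int) (hF : nonarch_local_field_char0 v) n :
  n%:R != 0 :> F = (n != 0)%N.
Proof. by rewrite ((pcharf0P F).1 (char0 hF)). Qed.

Lemma vunit_sqrt (F : fieldType) (v : F -> int) (hF : nonarch_local_field_char0 v) s :
  vunit v (s ^+ 2) -> vunit v s.
Proof.
move=> [s20 vs2]; have s0 : s != 0 by apply: contra_notN s20 => /eqP ->; rewrite expr0n.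
split; first exact/eqP.
move: vs2; rewrite expr2 (vM hF s0 s0); move: (v s) => z; lia.
Qed.

Lemma root_int2 (F : fieldType) (v : F -> int) (hF : nonarch_local_field_char0 v) a b c s :
  vint v a -> vint v b -> vint v c -> s ^+ 2 = b ^+ 2 - 4%:R * a * c ->
  vint v ((- b + s) / 2%:R).
Proof.
move=> ha hb hc hs.
have h2 : (2%:R : F) != 0 by rewrite (two_neq0 hF).
apply: (vint_root2 hF (b := b) (k := a * c)) => //; last exact: vint_mul.
have -> : ((- b + s) / 2%:R) ^+ 2 + b * ((- b + s) / 2%:R) + a * c
   = (s ^+ 2 - (b ^+ 2 - 4%:R * a * c)) / 4%:R.
  have h4 : (4%:R : F) != 0 by rewrite (two_neq0 hF).
  by field; apply/andP; split.
by rewrite hs subrr mul0r.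
Qed.

Lemma split_basis (F : fieldType) (v : F -> int) (hF : nonarch_local_field_char0 v) a b c
  (s : F) :
  vint v a -> vint v b -> vint v c -> vunit v (s ^+ 2) -> s ^+ 2 = b ^+ 2 - 4%:R * a * c ->
  o_basis2 v (intSplit v) 1
    (((- b + s) / 2%:R, (- b - s) / 2%:R) : (F^o * F^o)%type).
Proof.
move=> ha hb hc hu hs.
have [s0 vs] := vunit_sqrt hF hu.
have h2 : (2%:R : F) != 0 by rewrite (two_neq0 hF).
have x1 : vint v ((- b + s) / 2%:R) by apply: (root_int2 hF ha hb hc hs).
have x2 : vint v ((- b - s) / 2%:R).
  by apply: (root_int2 hF ha hb hc); rewrite sqrrN.
have hsi : vint v s^-1 by apply: vunit_int; apply: (vunit_inv hF).
split.
- by split; apply: vint1.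
- by split.
- move=> [z1 z2]; split.
  + move=> [/= hz1 hz2].
    exists (z1 - (z1 - z2) / s * ((- b + s) / 2%:R)), ((z1 - z2) / s); split.
    * apply: vint_sub => //; apply: vint_mul => //; apply: vint_mul => //.
      exact: vint_sub.
    * by apply: vint_mul => //; apply: vint_sub.
    * have s0' : s != 0 by apply/eqP.
      apply: injective_projections => /=; rewrite /GRing.scale /=.
        by rewrite mulr1 subrK.
      by field; apply/andP; split.
  + move=> [x [y [hx hy ->]]]; split => /=; rewrite /GRing.scale /= mulr1.
      by apply: vint_add => //; apply: vint_mul.
    by apply: vint_add => //; apply: vint_mul.
- move=> x y hx hy /(congr1 (fun p => (p.1, p.2))) /= [].
  rewrite /GRing.scale /= mulr1 => e1 e2.
  have : y * s = 0.
    have -> : y * s = (x + y * ((- b + s) / 2%:R)) - (x + y * ((- b - s) / 2%:R)) by field.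
    by rewrite e1 e2 subrr.
  move/eqP; rewrite mulf_eq0 => /orP [/eqP y0|/eqP //].
  by move: e1; rewrite y0 mul0r addr0.
Qed.

Lemma det2 (R : comNzRingType) (A : 'M[R]_2) : \det A = A 0 0 * A 1 1 - A 0 1 * A 1 0.
Proof.
rewrite (expand_det_row _ 0) !big_ord_recl big_ord0 /cofactor !det_mx11 !mxE /=.
have e1 : lift (ord0 : 'I_2) (ord0 : 'I_1) = 1 by apply: val_inj.
have e2 : lift (lift (ord0 : 'I_2) (ord0 : 'I_1)) (ord0 : 'I_1) = 0 by apply: val_inj.
rewrite e2 e1 /= expr0 expr1 !mul1r addr0 mulN1r mulrN.
by [].
Qed.

Lemma tr_sq0 (F : fieldType) n (M : 'M[F]_n) d :
  n = 2%N -> M *m M = d *: 1%:M -> ~ is_square d -> \tr M = 0.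
Proof.
move=> E; subst n => hM hd.
have ent i j : (M *m M) i j = M i 0 * M 0 j + M i 1 * M 1 j.
  rewrite mxE !big_ord_recl big_ord0 addr0.
  by have -> : lift (ord0 : 'I_2) (ord0 : 'I_1) = 1 by apply: val_inj.
have e00 := ent 0 0; have e01 := ent 0 1; have e10 := ent 1 0.
rewrite hM !mxE /= mulr1 in e00; rewrite hM !mxE /= mulr0 in e01 e10.
rewrite /mxtrace !big_ord_recl big_ord0 addr0.
have -> : lift (ord0 : 'I_2) (ord0 : 'I_1) = 1 by apply: val_inj.
apply/eqP; apply/negPn/negP => t0.
have m01 : M 0 1 = 0.
  apply/eqP; move: e01 => /esym /eqP.
  by rewrite mulrC -mulrDr mulf_eq0 (negbTE t0) orbF.
apply: hd; exists (M 0 0).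
by rewrite e00 m01 mul0r addr0 expr2.
Qed.

Ltac fld := field; try (repeat (apply/andP; split)); try assumption; try done.

Definition phi (F : fieldType) (L : fieldExtType F) (r : L) (X Y : F) : L := in_alg L X + in_alg L Y * r.

Lemma in_alg_inj (F : fieldType) (L : fieldExtType F) (k k' : F) :
  (k%:A : L) = k'%:A -> k = k'.
Proof. exact: (fmorph_inj (in_alg L)). Qed.

Lemma r_notin (F : fieldType) (L : fieldExtType F) (r : L) d :
  r ^+ 2 = d%:A -> ~ is_square d -> r \notin 1%VS.
Proof.
move=> hr hsq; apply/negP => /vlineP [k rk].
apply: hsq; exists k; apply: (@in_alg_inj F L).
by rewrite -hr rk; exact: (rmorphXn (in_alg L) 2 k).
Qed.

Lemma phiE (F : fieldType) (L : fieldExtType F) (r : L) X Y : phi r X Y = X%:A + Y *: r.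
Proof. by rewrite /phi mulr_algl. Qed.

Lemma phi_mul (F : fieldType) (L : fieldExtType F) (r : L) d (hr : r ^+ 2 = d%:A) X Y X' Y' :
  phi r X Y * phi r X' Y' = phi r (X * X' + Y * Y' * d) (X * Y' + Y * X').
Proof.
have hd : (d%:A : L) = r * r by rewrite -expr2 hr.
rewrite /phi !rmorphD !rmorphM /= hd.
ring.
Qed.

Lemma phi_add (F : fieldType) (L : fieldExtType F) (r : L) X Y X' Y' :
  phi r X Y + phi r X' Y' = phi r (X + X') (Y + Y').
Proof. rewrite /phi !rmorphD /=; ring. Qed.

Lemma phi_scale (F : fieldType) (L : fieldExtType F) (r : L) k X Y :
  in_alg L k * phi r X Y = phi r (k * X) (k * Y).
Proof. rewrite /phi !rmorphM /=; ring. Qed.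

Lemma in1 (F : fieldType) (L : fieldExtType F) (k : F) : in_alg L k \in 1%VS.
Proof. by apply/vlineP; exists k. Qed.

Lemma phi0 (F : fieldType) (L : fieldExtType F) (r : L) d (hr : r ^+ 2 = d%:A)
  (hsq : ~ is_square d) X Y : phi r X Y = 0 -> X = 0 /\ Y = 0.
Proof.
rewrite /phi => h.
have [Y0|Y0] := eqVneq Y 0.
  move: h; rewrite Y0 rmorph0 mul0r addr0 => /eqP; rewrite fmorph_eq0 => /eqP.
  by [].
exfalso; have := r_notin hr hsq; apply/negP/negPn.
have h' : in_alg L Y * r = - in_alg L X.
  by apply/eqP; rewrite -addr_eq0 addrC h.
have -> : r = in_alg L (- X / Y).
  have Y0' : in_alg L Y != 0 by rewrite fmorph_eq0.
  apply: (mulfI Y0'); rewrite h' -rmorphM mulrCA mulfV // mulr1 rmorphN.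
  by [].
exact: in1.
Qed.

Lemma adeg_le2 (F : fieldType) (L : fieldExtType F) (r : L) d (hr : r ^+ 2 = d%:A) :
  (adjoin_degree 1%VS r <= 2)%N.
Proof.
have hp : 'X^2 - (d%:A : L)%:P \is a polyOver (1%AS : {subfield L}).
  by rewrite polyOverXnsubC; exact: in1.
have hroot : root ('X^2 - (d%:A : L)%:P) r.
  by rewrite /root !hornerE hr subrr.
have := dvdp_leq _ (minPoly_dvdp hp hroot).
rewrite size_minPoly size_XnsubC // -size_poly_eq0 size_XnsubC //.
by move=> /(_ isT).
Qed.

Lemma dimL2 (F : fieldType) (L : fieldExtType F) (r : L) d (hr : r ^+ 2 = d%:A)
  (hsq : ~ is_square d) (hfull : <<1%VS; r>>%VS = fullv) : \dim {:L} = 2%N.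
Proof.
have h1 := adeg_le2 hr.
have h2 : adjoin_degree 1%VS r != 1%N by rewrite adjoin_deg_eq1; exact: r_notin hr hsq.
have h3 : (0 < \dim <<1%VS; r>>)%N by exact: (adim_gt0 <<1%AS; r>>%AS).
rewrite dim_Fadjoin dimv1 muln1 in h3.
rewrite -hfull dim_Fadjoin dimv1 muln1.
by move: h1 h2 h3; case: (adjoin_degree _ _) => [|[|[|]]].
Qed.

Lemma decomp (F : fieldType) (L : fieldExtType F) (r : L) d (hr : r ^+ 2 = d%:A)
  (hfull : <<1%VS; r>>%VS = fullv) z : exists X Y, z = phi r X Y.
Proof.
have hz : z \in <<1%VS; r>>%VS by rewrite hfull memvf.
have e := Fadjoin_poly_eq hz.
have hs : (size (Fadjoin_poly 1%VS r z) <= 2)%N.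
  exact: leq_trans (size_Fadjoin_poly _ _ _) (adeg_le2 hr).
move: (Fadjoin_polyOver 1%VS r z) => /polyOverP hc.
move: e; rewrite (horner_coef_wide _ hs) !big_ord_recl big_ord0 addr0 /= => <-.
have [k0 ->] := vlineP _ _ (hc 0%N).
have [k1 ->] := vlineP _ _ (hc 1%N).
exists k0, k1; rewrite /phi expr0 mulr1 expr1.
by [].
Qed.

Lemma mxof0 (F : fieldType) (L : fieldExtType F) e :
  passmx.mxof e e (0 : 'End(L)) = 0.
Proof.
have := passmx.mxof_linear e e 1 0 0; rewrite !scale1r addr0 => h.
by apply: (addrI (passmx.mxof e e 0)); rewrite addr0 -h.
Qed.

Lemma mxofZ (F : fieldType) (L : fieldExtType F) e X (A : 'End(L)) :
  passmx.mxof e e (X *: A) = X *: passmx.mxof e e A.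
Proof.
by have := passmx.mxof_linear e e X A 0; rewrite !addr0 mxof0 addr0.
Qed.

Lemma mxofL (F : fieldType) (L : fieldExtType F) e X Y (A B : 'End(L)) :
  passmx.mxof e e (X *: A + Y *: B) = X *: passmx.mxof e e A + Y *: passmx.mxof e e B.
Proof.
rewrite passmx.mxof_linear; congr (_ + _).
by have := passmx.mxof_linear e e Y B 0; rewrite !addr0 mxof0 addr0.
Qed.

Lemma trL_lin (F : fieldType) (L : fieldExtType F) (r : L) X Y :
  trL (phi r X Y) = X * trL (1 : L) + Y * trL r.
Proof.
rewrite /phi /trL mulr_algl -[in_alg L X]/(X *: 1).
have -> : amulr (X%:A + Y *: r) = X *: amulr 1 + Y *: amulr r.
  by rewrite raddfD /= !linearZ.
rewrite mxofL.
by rewrite mxtraceD !mxtraceZ.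
Qed.

Lemma trL1 (F : fieldType) (L : fieldExtType F) : trL (1 : L) = (\dim {:L})%:R.
Proof.
rewrite /trL.
have -> : passmx.mxof (vbasis fullv) (vbasis fullv) (amulr (1 : L)) = 1%:M.
  rewrite rmorph1; exact: passmx.mxof1 (basis_free (vbasisP fullv)).
exact: mxtrace1.
Qed.

Lemma trLr (F : fieldType) (L : fieldExtType F) (r : L) d (hr : r ^+ 2 = d%:A)
  (hsq : ~ is_square d) (hfull : <<1%VS; r>>%VS = fullv) : trL r = 0.
Proof.
apply: (tr_sq0 (d := d)) => //; first exact: dimL2 hr hsq hfull.
rewrite -passmx.mxof_comp; last exact: vbasisP.
have -> : (amulr r \o amulr r)%VF = amulr (r * r) by rewrite rmorphM.
rewrite -expr2 hr linearZ /= rmorph1 mxofZ.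
congr (_ *: _); exact: passmx.mxof1 (basis_free (vbasisP fullv)).
Qed.

Lemma trL_phi (F : fieldType) (L : fieldExtType F) (r : L) d (hr : r ^+ 2 = d%:A)
  (hsq : ~ is_square d) (hfull : <<1%VS; r>>%VS = fullv) X Y :
  trL (phi r X Y) = 2%:R * X.
Proof.
by rewrite trL_lin trL1 (trLr hr hsq hfull) (dimL2 hr hsq hfull) mulr0 addr0 mulrC.
Qed.

Lemma disc2_phi (F : fieldType) (L : fieldExtType F) (r : L) d (hr : r ^+ 2 = d%:A)
  (hsq : ~ is_square d) (hfull : <<1%VS; r>>%VS = fullv) X Y X' Y' :
  disc2 (phi r X Y) (phi r X' Y') = 4%:R * d * (X * Y' - X' * Y) ^+ 2.
Proof.
rewrite /disc2 det2 !mxE /= !(phi_mul hr) !(trL_phi hr hsq hfull).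
ring.
Qed.

Lemma intL_quad (F : fieldType) (v : F -> int) (hF : nonarch_local_field_char0 v)
  (L : fieldExtType F) (t : L) B K :
  vint v B -> vint v K -> (t + in_alg L B) * t + in_alg L K = 0 -> intL v t.
Proof.
move=> hB hK ht.
exists (('X + B%:P) * 'X + K%:P); split.
- have hm : ('X + B%:P) * 'X \is monic by rewrite monicMl ?monicXaddC ?monicX.
  rewrite monicE lead_coefDl; first exact: hm.
  rewrite size_mulX ?monic_neq0 ?monicXaddC // size_XaddC.
  exact: leq_ltn_trans (size_polyC_leq1 _) _.
- move=> i; rewrite coefD coefMX coefD coefX !coefC.
  case: i => [|[|[|i]]] /=; rewrite ?addr0 ?add0r //; first [exact: (vint1 hF) | exact: vint0 | idtac].
- rewrite /root !rmorphD !rmorphM /= map_polyX !map_polyC /= !hornerE.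
  rewrite map_polyXaddC !hornerE; apply/eqP; exact: ht.
Qed.

Lemma intL_scal (F : fieldType) (v : F -> int) (hF : nonarch_local_field_char0 v)
  (L : fieldExtType F) k : vint v k -> intL v (in_alg L k).
Proof.
move=> hk; apply: (intL_quad hF (B := - k) (K := 0)).
- exact: vint_opp.
- exact: vint0.
- by rewrite rmorphN subrr mul0r rmorph0 addr0.
Qed.

Lemma comb_phi (F : fieldType) (L : fieldExtType F) (r : L) x y X Y :
  x%:A + y *: phi r X Y = phi r (x + y * X) (y * Y).
Proof.
rewrite -(mulr_algl y (phi r X Y)) phi_scale /phi rmorphD /=.
by rewrite addrA.
Qed.

Lemma intL_phi (F : fieldType) (v : F -> int) (hF : nonarch_local_field_char0 v)
  (L : fieldExtType F) (r : L) d (hr : r ^+ 2 = d%:A) X Y :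
  vint v (2%:R * X) -> vint v (X ^+ 2 - Y ^+ 2 * d) -> intL v (phi r X Y).
Proof.
move=> h1 h2; apply: (intL_quad hF (B := - (2%:R * X)) (K := X ^+ 2 - Y ^+ 2 * d)).
- exact: vint_opp.
- exact: h2.
have hd : (d%:A : L) = r * r by rewrite -expr2 hr.
rewrite /phi !rmorphD ?rmorphB ?rmorphN ?rmorphM ?rmorphXn ?rmorph_nat /= ?hd.
ring.
Qed.

Lemma field_basis (F : fieldType) (v : F -> int) (hF : nonarch_local_field_char0 v)
  (a b c d : F) (L : fieldExtType F) (r : L) :
  d = b ^+ 2 - 4%:R * a * c -> vint v a -> vint v b -> vint v c ->
  ~ is_square d -> r ^+ 2 = d%:A -> <<1%VS; r>>%VS = fullv ->
  generates_disc_ideal v L d ->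
  o_basis2 v (intL v (L:=L)) 1 (2%:R^-1 *: (- b%:A + r)).
Proof.
move=> hd ha hb hc hsq hr hfull hgen.
have h2 : (2%:R : F) != 0 by rewrite (two_neq0 hF).
have xiE : 2%:R^-1 *: (- b%:A + r) = phi r (- b / 2%:R) 2%:R^-1.
  rewrite phiE scalerDr scalerN scalerA -scalerN; congr (_ + _).
  rewrite scalerN -scaleNr; congr (_ *: _); by rewrite mulNr mulrC.
rewrite xiE.
have d0 : d != 0.
  by apply/eqP => d0; apply: hsq; exists 0; rewrite d0 expr0n.
have hcomb x y : x%:A + y *: phi r (- b / 2%:R) 2%:R^-1
    = phi r (x + y * (- b / 2%:R)) (y * 2%:R^-1) by exact: comb_phi.
have back x y : vint v x -> vint v y ->
    intL v (x%:A + y *: phi r (- b / 2%:R) 2%:R^-1).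
  move=> hx hy; rewrite hcomb; apply: (intL_phi hF hr).
  - have -> : 2%:R * (x + y * (- b / 2%:R)) = 2%:R * x - y * b by fld.
    apply: vint_sub => //; [apply: vint_mul => //; exact: vint_nat|exact: vint_mul].
  - have -> : (x + y * (- b / 2%:R)) ^+ 2 - (y * 2%:R^-1) ^+ 2 * d
        = x ^+ 2 - x * y * b + y ^+ 2 * (a * c).
      by rewrite hd; fld.
    apply: vint_add => //; last by apply: vint_mul => //; [exact: vint_exp | exact: vint_mul].
    apply: vint_sub => //; first exact: vint_exp.
    by apply: vint_mul => //; exact: vint_mul.
have int1 : intL v (1 : L).
  by have := @intL_scal F v hF L 1 (vint1 hF); rewrite rmorph1.
have intxi : intL v (phi r (- b / 2%:R) 2%:R^-1).
  have := back 0 1 (vint0 v) (vint1 hF).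
  by rewrite scale1r -[0%:A]/(in_alg L 0) rmorph0 add0r.
have one_phi : (1 : L) = phi r 1 0 by rewrite /phi rmorph0 mul0r addr0 rmorph1.
split => //.
- move=> z; split; last first.
    by move=> [x [y [hx hy ->]]]; rewrite -[x *: 1]/(x%:A); exact: back.
  move=> hz.
  have [X [Y zE]] := decomp hr hfull z.
  have ideal u : intL v u -> exists2 r0, vint v r0 & disc2 u z = r0 * d.
    move=> hu; apply/hgen; exists [:: (1, (u, z))]; split.
      move=> q; rewrite inE => /eqP -> /=; split=> //; exact: vint1 hF.
    by rewrite big_cons big_nil /= mul1r addr0.
  have [r1 hr1 e1] := ideal 1 int1.
  have [r2 hr2 e2] := ideal _ intxi.
  rewrite one_phi zE !(disc2_phi hr hsq hfull) in e1 e2.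
  have vy : vint v (2%:R * Y).
    apply: (vint_sq hF); have -> : (2%:R * Y) ^+ 2 = r1.
      apply: (mulIf d0); rewrite -e1; fld.
    exact: hr1.
  have vx : vint v (X + b * Y).
    apply: (vint_sq hF); have -> : (X + b * Y) ^+ 2 = r2.
      apply: (mulIf d0); rewrite -e2; fld.
    exact: hr2.
  exists (X + b * Y), (2%:R * Y); split => //.
  rewrite zE -[(X + b * Y) *: 1]/((X + b * Y)%:A) hcomb; congr phi; fld.
- move=> x y hx hy; rewrite -[x *: 1]/(x%:A) hcomb => /(phi0 hr hsq) [e1 e2].
  have y0 : y = 0.
    by move/eqP: e2; rewrite mulf_eq0 invr_eq0 (negbTE h2) orbF => /eqP.
  by move: e1; rewrite y0 mul0r addr0.
Qed.

Theorem mainTheorem7 (F : fieldType) (v : F -> int)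
  (hF : nonarch_local_field_char0 v) (a b c : F) :
  let d := b ^+ 2 - 4%:R * a * c in
  d != 0 ->
  (* (A1) *)
  vint v a -> vint v b -> vunit v c ->
  (* case L = F(sqrt d) a field *)
  (~ is_square d ->
     forall (L : fieldExtType F) (r : L),
       r ^+ 2 = d%:A -> <<1%VS; r>>%VS = fullv ->
       (* (A2), field case *)
       generates_disc_ideal v L d ->
       let xi0 := 2%:R^-1 *: (- b%:A + r) in
       let alpha := (2%:R * c)^-1 *: (b%:A + r) in
       [/\ o_basis2 v (intL v (L:=L)) 1 xi0,
           o_basis2 v (intL v (L:=L)) 1 alpha &
           ~ exists x, vint v x /\ ext_ideal v (intL v (L:=L)) (alpha + x%:A)])
  /\
  (* case L = F + F *)
  (is_square d ->
     (* (A2), split case *)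
     vunit v d ->
     forall s : F, s ^+ 2 = d ->
       let xi0 : (F^o * F^o)%type := ((- b + s) / 2%:R, (- b - s) / 2%:R) in
       let alpha : (F^o * F^o)%type := ((b + s) / (2%:R * c), (b - s) / (2%:R * c)) in
       [/\ o_basis2 v (intSplit v) 1 xi0,
           o_basis2 v (intSplit v) 1 alpha &
           ~ exists x, vint v x /\ ext_ideal v (intSplit v) (alpha + x%:A)]).
Proof.
move=> d d0 ha hb hc.
have h2 : (2%:R : F) != 0 by rewrite (two_neq0 hF).
have [c0 _] := hc.
have c0' : c != 0 by apply/eqP.
split.
- move=> hsq L r hr hfull hgen xi0 alpha.
  have B1 : o_basis2 v (intL v (L:=L)) 1 xi0.
    exact: (field_basis hF (a := a) (c := c) erefl ha hb (vunit_int hc) hsq hr hfull hgen).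
  have alphaE : alpha = c^-1 *: (xi0 + b *: 1).
    have xiE : xi0 = phi r (- b / 2%:R) 2%:R^-1.
      rewrite /xi0 phiE scalerDr scalerN scalerA -scalerN; congr (_ + _).
      rewrite scalerN -scaleNr; congr (_ *: _); by rewrite mulNr mulrC.
    rewrite xiE addrC -[b *: 1]/(b%:A) -(scale1r (phi r _ _)) comb_phi.
    rewrite -mulr_algl phi_scale /alpha phiE scalerDr scalerA.
    by congr (_ *: _ + _ *: _); fld.
  have B2 : o_basis2 v (intL v (L:=L)) 1 alpha.
    by rewrite alphaE; apply: (basis_change hF B1 (vunit_inv hF hc) hb).
  by split => //; apply: (no_ideal hF B2).
- move=> _ hdu s hs xi0 alpha.
  have B1 : o_basis2 v (intSplit v) 1 xi0.
    by apply: (split_basis hF ha hb (vunit_int hc)); rewrite hs.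
  have alphaE : alpha = c^-1 *: (xi0 + b *: 1).
    apply: injective_projections => /=; rewrite /GRing.scale /= mulr1; fld.
  have B2 : o_basis2 v (intSplit v) 1 alpha.
    by rewrite alphaE; apply: (basis_change hF B1 (vunit_inv hF hc) hb).
  by split => //; apply: (no_ideal hF B2).
Qed.
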